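(* Let $\mathbf{X} \in \mathbb{R}^{n \times m}$ be a matrix with rows $\mathbf{x}_1^\top, \dots, \mathbf{x}_n^\top$ and let $\mathbf{y} = (y_1,\dots,y_n)^\top \in \mathbb{R}^n$. Assume $\mathbf{X}$ has full row rank, i.e. $\operatorname{rank}(\mathbf{X}) = n$. Let $\hat{\beta}^{\min\text{-}\ell_1}$ be a minimizer of $\|\beta\|_1$ subject to $\mathbf{X}\beta = \mathbf{y}$, and let $\hat{\beta}^{\min\text{-}\ell_2}$ be the minimizer of $\|\beta\|_2$ subject to $\mathbf{X}\beta = \mathbf{y}$. Then there exists $\bar{\delta} > 0$ such that: 1. $\hat{\beta}^{\min\text{-}\ell_1}$ minimizes $\beta \mapsto R_\infty^{\mathrm{adv}}(\beta; \delta)$ over $\mathbb{R}^m$ for all $0 < \delta < \bar{\delta}$; 2. $\hat{\beta}^{\min\text{-}\ell_2}$ minimizes $\beta \mapsto R_2^{\mathrm{adv}}(\beta; \delta)$ over $\mathbb{R}^m$ for all $0 < \delta < \bar{\delta}$.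
   Context: For $p \in [1,\infty]$ and $\delta \ge 0$, the empirical adversarial risk of a parameter $\beta \in \mathbb{R}^m$ on the data $\{(\mathbf{x}_i, y_i)\}_{i=1}^n \subset \mathbb{R}^m \times \mathbb{R}$ is $$R_p^{\mathrm{adv}}(\beta; \delta) = \frac{1}{n}\sum_{i=1}^n \max_{\|\Delta \mathbf{x}_i\|_p \le \delta} \big(y_i - (\mathbf{x}_i + \Delta\mathbf{x}_i)^\top \beta\big)^2,$$ where $\|\cdot\|_p$ is the $\ell_p$ norm on $\mathbb{R}^m$ (with $\|a\|_\infty = \max_i |a_i|$). *)

(* Defs.v *)
From mathcomp Require Import all_boot all_order all_algebra.
From mathcomp Require Import classical_sets reals.
Set Implicit Arguments. Unset Strict Implicit. Unset Printing Implicit Defensive.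
Import Order.TTheory GRing.Theory Num.Theory.
Local Open Scope ring_scope.
Local Open Scope classical_set_scope.

Definition l1norm (R : realType) (m : nat) (v : 'cV[R]_m) : R :=
  \sum_(j < m) `|v j 0|.
Definition l2norm (R : realType) (m : nat) (v : 'cV[R]_m) : R :=
  Num.sqrt (\sum_(j < m) v j 0 ^+ 2).
Definition linfnorm (R : realType) (m : nat) (v : 'cV[R]_m) : R :=
  \big[Num.max/0]_(j < m) `|v j 0|.

(* The max is written as the supremum of the
   (nonempty, bounded, compact-attained) set of losses. *)
Definition adv_risk (R : realType) (n m : nat) (nrm : 'cV[R]_m -> R)
  (X : 'M[R]_(n, m)) (y : 'cV[R]_n) (beta : 'cV[R]_m) (delta : R) : R :=
  n%:R^-1 * \sum_(i < n)
    sup [set (y i 0 - \sum_(j < m) (X i j + D j 0) * beta j 0) ^+ 2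
         | D in [set D : 'cV[R]_m | nrm D <= delta]].

Definition adv_risk_inf (R : realType) (n m : nat) X y beta delta :=
  @adv_risk R n m (@linfnorm R m) X y beta delta.
Definition adv_risk_2 (R : realType) (n m : nat) X y beta delta :=
  @adv_risk R n m (@l2norm R m) X y beta delta.

(* Main.v *)
Require Import Defs.
From mathcomp Require Import all_boot all_order all_algebra.
From mathcomp Require Import classical_sets reals.
From mathcomp Require Import ring lra.
Import Order.TTheory GRing.Theory Num.Theory.
Local Open Scope ring_scope.

Section Gen.
Variable R : realType.

Lemma sq_abs (x : R) : `|x| ^+ 2 = x ^+ 2.
Proof. by rewrite real_normK // num_real. Qed.

Lemma CS k (a b : 'I_k -> R) :
  (\sum_i a i * b i) ^+ 2 <= (\sum_i a i ^+ 2) * (\sum_i b i ^+ 2).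
Proof.
set A := \sum_i a i ^+ 2; set B := \sum_i b i ^+ 2; set S := \sum_i a i * b i.
have A0 : 0 <= A by apply: sumr_ge0 => i _; exact: sqr_ge0.
have B0 : 0 <= B by apply: sumr_ge0 => i _; exact: sqr_ge0.
have key : forall t, 0 <= A * t ^+ 2 - 2 * S * t + B.
  move=> t; have -> : A * t ^+ 2 - 2 * S * t + B = \sum_i (a i * t - b i) ^+ 2.
    rewrite /A /B /S mulr_suml mulr_sumr mulr_suml -sumrB -big_split /=.
    by apply: eq_bigr => i _; ring.
  by apply: sumr_ge0 => i _; exact: sqr_ge0.
have [A00|Apos] := eqVneq A 0.
  have ai : forall i, a i = 0.
    move=> i; apply/eqP; rewrite -sqrf_eq0; apply/eqP.
    by apply: (psumr_eq0P (P := xpredT) (F := fun i => a i ^+ 2)) => // j _; exact: sqr_ge0.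
  have -> : S = 0 by rewrite /S big1 // => i _; rewrite ai mul0r.
  by rewrite expr0n /= mulr_ge0.
have Ap : 0 < A by rewrite lt_def Apos A0.
have := key (S / A).
have -> : A * (S / A) ^+ 2 - 2 * S * (S / A) + B = B - S ^+ 2 / A.
  by field; rewrite Apos.
rewrite subr_ge0 ler_pdivrMr // => h; by rewrite mulrC.
Qed.

Lemma sum_le_sq k (x : 'I_k -> R) : (forall i, 0 <= x i) ->
  \sum_i x i ^+ 2 <= (\sum_i x i) ^+ 2.
Proof.
move=> x0; rewrite expr2 mulr_suml; apply: ler_sum => i _.
rewrite expr2 ler_wpM2l //.
by rewrite (bigD1 i) //= lerDl sumr_ge0.
Qed.

Local Open Scope classical_set_scope.

Definition dot {m : nat} (D b : 'cV[R]_m) := \sum_j D j 0 * b j 0.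

Lemma sup_eq m (nrm N : 'cV[R]_m -> R) (b : 'cV[R]_m) (r d : R) :
  0 <= d -> 0 <= N b ->
  (forall D, `|dot D b| <= nrm D * N b) ->
  (exists D, nrm D <= d /\ dot D b = d * N b) ->
  (forall D, nrm (- D) = nrm D) ->
  sup [set (r - dot D b) ^+ 2 | D in [set D | nrm D <= d]] = (`|r| + d * N b) ^+ 2.
Proof.
move=> d0 N0 P1 [D0 [HD0 eD0]] P3.
set E := [set _ | D in _].
have ub : ubound E ((`|r| + d * N b) ^+ 2).
  move=> x [D /= HD <-].
  have h1 : `|dot D b| <= d * N b.
    by apply: le_trans (P1 D) _; rewrite ler_wpM2r.
  rewrite -sq_abs; apply: lerXn2r; rewrite ?nnegrE ?addr_ge0 ?mulr_ge0 //.
  by apply: le_trans (ler_normB _ _) _; rewrite lerD2l.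
have inE : E ((`|r| + d * N b) ^+ 2).
  have [r0|r0] := leP 0 r.
    exists (- D0); first by rewrite /= P3.
    rewrite ger0_norm // /dot.
    have -> : \sum_j (- D0) j 0 * b j 0 = - dot D0 b.
      by rewrite /dot -sumrN; apply: eq_bigr => j _; rewrite mxE mulNr.
    by rewrite eD0 opprK.
  exists D0 => //; rewrite ltr0_norm // eD0 -sqrrN; congr (_ ^+ 2); ring.
apply/le_anti/andP; split.
  by apply: ge_sup => //; exists ((`|r| + d * N b) ^+ 2).
by apply: ub_le_sup => //; exists ((`|r| + d * N b) ^+ 2).
Qed.

Lemma risk_eq n m (nrm N : 'cV[R]_m -> R) X (y : 'cV[R]_n) b d :
  0 <= d -> 0 <= N b ->
  (forall D, `|dot D b| <= nrm D * N b) ->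
  (exists D, nrm D <= d /\ dot D b = d * N b) ->
  (forall D, nrm (- D) = nrm D) ->
  adv_risk nrm X y b d =
  n%:R^-1 * \sum_i (`|y i 0 - \sum_j X i j * b j 0| + d * N b) ^+ 2.
Proof.
move=> d0 N0 P1 P2 P3; rewrite /adv_risk; congr (_ * _); apply: eq_bigr => i _.
rewrite -(@sup_eq m nrm N b _ d d0 N0 P1 P2 P3); congr sup.
have E : forall D : 'cV[R]_m, y i 0 - \sum_j (X i j + D j 0) * b j 0 =
   (y i 0 - \sum_j X i j * b j 0) - dot D b.
  move=> D; rewrite /dot -addrA -opprD -big_split /=; congr (_ - _).
  by apply: eq_bigr => j _; rewrite mulrDl.
by apply/seteqP; split => x [D HD <-]; exists D => //; rewrite E.
Qed.

Lemma main_gen n m (nrm N : 'cV[R]_m -> R) (X : 'M[R]_(n, m)) y bs C :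
  (forall b, 0 <= N b) ->
  (forall D b, `|dot D b| <= nrm D * N b) ->
  (forall b d, 0 <= d -> exists D, nrm D <= d /\ dot D b = d * N b) ->
  (forall D, nrm (- D) = nrm D) ->
  0 <= C -> X *m bs = y ->
  (forall b, N bs <= N b + C * \sum_i `|y i 0 - \sum_j X i j * b j 0|) ->
  forall d, 0 <= d -> n%:R * d * C <= 1 ->
  forall b, adv_risk nrm X y bs d <= adv_risk nrm X y b d.
Proof.
move=> N0 P1 P2 P3 C0 Hbs Hint d d0 hd b.
rewrite (@risk_eq n m nrm N X y bs d d0 (N0 bs) (P1^~ bs) (P2 bs d d0) P3).
rewrite (@risk_eq n m nrm N X y b d d0 (N0 b) (P1^~ b) (P2 b d d0) P3).
apply: ler_wpM2l; first by rewrite invr_ge0.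
have r0 : forall i, y i 0 - \sum_j X i j * bs j 0 = 0.
  by move=> i; rewrite -Hbs mxE subrr.
under eq_bigr => i _ do rewrite r0 normr0 add0r.
rewrite sumr_const card_ord.
set r := fun i => `|y i 0 - \sum_j X i j * b j 0|.
set s := \sum_i r i.
set T := \sum_i r i ^+ 2.
set a := d * N b.
have r0' : forall i, 0 <= r i by move=> i; exact: normr_ge0.
have s0 : 0 <= s by apply: sumr_ge0.
have a0 : 0 <= a by rewrite mulr_ge0.
have eR : \sum_i (r i + a) ^+ 2 = T + 2 * a * s + n%:R * a ^+ 2.
  have ea : \sum_(i < n) a ^+ 2 = n%:R * a ^+ 2 by rewrite sumr_const card_ord mulr_natl.
  rewrite /T /s mulr_sumr -ea -!big_split /=; apply: eq_bigr => i _; ring.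
rewrite eR -[_ *+ n]mulr_natl.
have hs : s ^+ 2 <= n%:R * T.
  have := @CS n (fun _ : 'I_n => 1) r.
  have e1 : \sum_i (1 * r i) = s by apply: eq_bigr => i _; rewrite mul1r.
  have e2 : \sum_(i < n) (1:R) ^+ 2 = n%:R.
    by rewrite (eq_bigr (fun _ => 1)) ?sumr_const ?card_ord // => i _; rewrite expr1n.
  by rewrite e1 e2.
have hu : d * N bs <= a + d * C * s.
  by rewrite /a -mulrA -mulrDr ler_wpM2l // Hint.
have u0 : 0 <= d * N bs by rewrite mulr_ge0.
have k0 : 0 <= (n%:R : R) by [].
set k := (n%:R : R) in hd hs k0 *.
set u := d * N bs in hu u0 *.
have p0 : 0 <= k * d * C by rewrite !mulr_ge0.
have step1 : k * u ^+ 2 <= k * (a + d * C * s) ^+ 2.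
  by rewrite ler_wpM2l // lerXn2r // nnegrE addr_ge0 // !mulr_ge0.
apply: le_trans step1 _.
have e2 : k * (a + d * C * s) ^+ 2 = k * a ^+ 2 + 2 * a * s * (k * d * C) + (d * C) ^+ 2 * (k * s ^+ 2).
  ring.
rewrite e2.
have h3 : (d * C) ^+ 2 * (k * s ^+ 2) <= T.
  have : (d * C) ^+ 2 * (k * s ^+ 2) <= (d * C) ^+ 2 * (k * (k * T)).
    by rewrite ler_wpM2l ?sqr_ge0 // ler_wpM2l.
  move/le_trans; apply.
  have -> : (d * C) ^+ 2 * (k * (k * T)) = (k * d * C) ^+ 2 * T by ring.
  have T0 : 0 <= T by apply: sumr_ge0 => i _; exact: sqr_ge0.
  rewrite -[leRHS]mul1r ler_wpM2r //.
  by rewrite expr2 mulr_ile1.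
have h4 : 2 * a * s * (k * d * C) <= 2 * a * s.
  by rewrite -[leRHS]mulr1 ler_wpM2l // !mulr_ge0.
lra.
Qed.

Lemma interp n m (N : 'cV[R]_m -> R) (X : 'M[R]_(n, m)) y bs (Z : 'M[R]_(m, n)) :
  (forall b c, N (b + c) <= N b + N c) -> (forall v, N v <= l1norm v) ->
  X *m Z = 1%:M ->
  (forall b, X *m b = y -> N bs <= N b) ->
  forall b, N bs <= N b + (\sum_j \sum_i `|Z j i|) * \sum_i `|y i 0 - \sum_j X i j * b j 0|.
Proof.
move=> Ntri Nl1 HZ Hmin b.
set rv := y - X *m b.
have Hb' : X *m (b + Z *m rv) = y.
  by rewrite mulmxDr mulmxA HZ mul1mx /rv addrC subrK.
apply: le_trans (Hmin _ Hb') _.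
apply: le_trans (Ntri _ _) _; rewrite lerD2l.
apply: le_trans (Nl1 _) _.
set s := \sum_i `|y i 0 - \sum_j X i j * b j 0|.
have ers : forall i, `|rv i 0| <= s.
  move=> i; rewrite /s (bigD1 i) //= -[X in X <= _]addr0 lerD //.
    by rewrite /rv !mxE.
  by apply: sumr_ge0 => ? _.
rewrite /l1norm mulr_suml; apply: ler_sum => j _.
rewrite mxE mulr_suml; apply: le_trans (ler_norm_sum _ _ _) _.
apply: ler_sum => i _; rewrite normrM ler_wpM2l //.
Qed.

Lemma l1_tri m (b c : 'cV[R]_m) : l1norm (b + c) <= l1norm b + l1norm c.
Proof.
rewrite /l1norm -big_split /=; apply: ler_sum => j _; rewrite mxE; exact: ler_normD.
Qed.

Lemma l1_ge0 m (b : 'cV[R]_m) : 0 <= l1norm b.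
Proof. by apply: sumr_ge0. Qed.

Lemma linf_ge m (D : 'cV[R]_m) j : `|D j 0| <= linfnorm D.
Proof. by rewrite /linfnorm; exact: (le_bigmax _ (fun j => `|D j 0|) j). Qed.

Lemma linf_P1 m (D b : 'cV[R]_m) : `|dot D b| <= linfnorm D * l1norm b.
Proof.
apply: le_trans (ler_norm_sum _ _ _) _; rewrite /l1norm mulr_sumr.
by apply: ler_sum => j _; rewrite normrM ler_wpM2r // linf_ge.
Qed.

Lemma linf_P2 m (b : 'cV[R]_m) d : 0 <= d ->
  exists D, linfnorm D <= d /\ dot D b = d * l1norm b.
Proof.
move=> d0; exists (\col_j (if 0 <= b j 0 then d else - d)); split.
  rewrite /linfnorm; apply: bigmax_le => // j _; rewrite mxE.
  by case: ifP => _; rewrite ?normrN ger0_norm.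
rewrite /dot /l1norm mulr_sumr; apply: eq_bigr => j _; rewrite mxE.
case: ifPn => h; first by rewrite ger0_norm.
by rewrite ltr0_norm ?ltNge // mulNr mulrN.
Qed.

Lemma linf_P3 m (D : 'cV[R]_m) : linfnorm (- D) = linfnorm D.
Proof. by rewrite /linfnorm; apply: eq_bigr => j _; rewrite mxE normrN. Qed.

Lemma l2_P1 m (D b : 'cV[R]_m) : `|dot D b| <= l2norm D * l2norm b.
Proof.
rewrite /l2norm -sqrtrM; last by apply: sumr_ge0 => j _; exact: sqr_ge0.
rewrite -sqrtr_sqr ler_sqrt; first exact: (@CS m (fun j => D j 0) (fun j => b j 0)).
by rewrite mulr_ge0 //; apply: sumr_ge0 => j _; exact: sqr_ge0.
Qed.

Lemma l2_ge0 m (b : 'cV[R]_m) : 0 <= l2norm b.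
Proof. exact: sqrtr_ge0. Qed.

Lemma l2_scale m (c : R) (b : 'cV[R]_m) : l2norm (c *: b) = `|c| * l2norm b.
Proof.
rewrite /l2norm -sqrtr_sqr -sqrtrM ?sqr_ge0 //; congr Num.sqrt.
by rewrite mulr_sumr; apply: eq_bigr => j _; rewrite mxE exprMn.
Qed.

Lemma l2_sq m (b : 'cV[R]_m) : l2norm b ^+ 2 = \sum_j b j 0 ^+ 2.
Proof. by rewrite /l2norm sqr_sqrtr //; apply: sumr_ge0 => j _; exact: sqr_ge0. Qed.

Lemma l2_P2 m (b : 'cV[R]_m) d : 0 <= d ->
  exists D, l2norm D <= d /\ dot D b = d * l2norm b.
Proof.
move=> d0; have [z|nz] := eqVneq (l2norm b) 0.
  exists 0; split; last by rewrite z mulr0 /dot big1 // => j _; rewrite mxE mul0r.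
  by rewrite /l2norm big1 ?sqrtr0 // => j _; rewrite mxE expr0n.
exists ((d / l2norm b) *: b); split.
  rewrite l2_scale ger0_norm ?divr_ge0 ?l2_ge0 // divfK //.
rewrite /dot.
have -> : \sum_j ((d / l2norm b) *: b) j 0 * b j 0 = d / l2norm b * l2norm b ^+ 2.
  by rewrite l2_sq mulr_sumr; apply: eq_bigr => j _; rewrite mxE expr2 mulrA.
by rewrite expr2 mulrA divfK.
Qed.

Lemma l2_P3 m (D : 'cV[R]_m) : l2norm (- D) = l2norm D.
Proof. by rewrite /l2norm; congr Num.sqrt; apply: eq_bigr => j _; rewrite mxE sqrrN. Qed.

Lemma l2_tri m (b c : 'cV[R]_m) : l2norm (b + c) <= l2norm b + l2norm c.
Proof.
rewrite -(ger0_norm (addr_ge0 (l2_ge0 _ b) (l2_ge0 _ c))) -sqrtr_sqr {1}/l2norm ler_sqrt ?sqr_ge0 //.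
have e : \sum_j (b + c) j 0 ^+ 2 = \sum_j b j 0 ^+ 2 + \sum_j c j 0 ^+ 2 + 2 * dot b c.
  rewrite /dot mulr_sumr -!big_split /=; apply: eq_bigr => j _; rewrite !mxE; ring.
rewrite e -!l2_sq.
have := l2_P1 _ b c; have := ler_norm (dot b c).
set t := dot b c; set u := l2norm b; set v := l2norm c; set w := `|t|.
move=> h1 h2; nra.
Qed.

Lemma l2_l1 m (b : 'cV[R]_m) : l2norm b <= l1norm b.
Proof.
rewrite -(ger0_norm (l1_ge0 _ b)) -sqrtr_sqr /l2norm ler_sqrt ?sqr_ge0 //.
rewrite /l1norm; under eq_bigr => j _ do rewrite -sq_abs.
by apply: sum_le_sq => j; exact: normr_ge0.
Qed.
End Gen.

Theorem theorem2 (R : realType) (n m : nat) (X : 'M[R]_(n, m)) (y : 'cV[R]_n)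
  (b1 b2 : 'cV[R]_m) :
  \rank X = n ->
  X *m b1 = y -> (forall b : 'cV[R]_m, X *m b = y -> l1norm b1 <= l1norm b) ->
  X *m b2 = y -> (forall b : 'cV[R]_m, X *m b = y -> l2norm b2 <= l2norm b) ->
  exists dbar : R, 0 < dbar /\
    forall delta : R, 0 < delta -> delta < dbar ->
      (forall b : 'cV[R]_m, adv_risk_inf X y b1 delta <= adv_risk_inf X y b delta) /\
      (forall b : 'cV[R]_m, adv_risk_2 X y b2 delta <= adv_risk_2 X y b delta).
Proof.
move=> HX Hb1 Hmin1 Hb2 Hmin2.
have [Z HZ] : exists Z, X *m Z = 1%:M by apply/row_freeP; rewrite /row_free HX.
set C := \sum_j \sum_i `|Z j i|.
have C0 : 0 <= C by apply: sumr_ge0 => j _; apply: sumr_ge0.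
have k0 : 0 <= (n%:R : R) by [].
have D0 : 0 < n%:R * C + 1 by rewrite ltr_wpDl // mulr_ge0.
exists (1 / (n%:R * C + 1)); split; first by rewrite divr_gt0.
move=> d d0 dlt.
have hd : n%:R * d * C <= 1.
  move: dlt; rewrite ltr_pdivlMr // => h.
  have -> : n%:R * d * C = d * (n%:R * C + 1) - d by ring.
  lra.
have d0' : 0 <= d by exact: ltW.
split => b.
  apply: (@main_gen R n m (@linfnorm R m) (@l1norm R m) X y b1 C
            (@l1_ge0 R m) (@linf_P1 R m) (@linf_P2 R m) (@linf_P3 R m) C0 Hb1) => //.
  exact: (@interp R n m (@l1norm R m) X y b1 Z (@l1_tri R m) (fun v => lexx _) HZ Hmin1).
apply: (@main_gen R n m (@l2norm R m) (@l2norm R m) X y b2 C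
          (@l2_ge0 R m) (@l2_P1 R m) (@l2_P2 R m) (@l2_P3 R m) C0 Hb2) => //.
exact: (@interp R n m (@l2norm R m) X y b2 Z (@l2_tri R m) (@l2_l1 R m) HZ Hmin2).
Qed.
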